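(* Let $\Omega\subset\mathbb R^d$ be a bounded Borel set, $f:\Omega\to[0,\infty)$ bounded with $\int_\Omega f=1$, $p\ge1$, $x_1,x_2\in\Omega$, and $h_1,h_2:[0,1]\to[0,\infty)$ non-decreasing and Lipschitz continuous. Let $(\rho_j)_{j\ge1}$ be a sequence in $(0,1)$ with $\rho_j\to1$ and $\sum_{j\ge1}(1-\rho_j)=+\infty$. For any Borel $\psi_0:\Omega\to[0,1]$ define recursively: $m_j=\int_\Omega(1-\psi_j)f\,dx$, $t_{j+1}=h_2(1-m_j)-h_1(m_j)$, and $$\psi_{j+1}(x)=\begin{cases}\rho_j\,\psi_j(x)&\text{if }\tau(x)<t_{j+1},\\ 1-\rho_j(1-\psi_j(x))&\text{otherwise.}\end{cases}$$ Then $\psi_j\to\bar\psi$ uniformly on every compact subset of $\Omega\setminus\{\tau=\bar t\}$.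
   Context: $\tau(x)=|x-x_1|^p-|x-x_2|^p$, $m(t)=\int_{\{x\in\Omega:\tau(x)<t\}}f\,dx$, $G(t)=h_2(1-m(t))-h_1(m(t))$. There is a unique $\bar t$ with $G(\bar t)=\bar t$, and $\bar\psi(x)=0$ if $\tau(x)<\bar t$, $\bar\psi(x)=1$ if $\tau(x)>\bar t$ (the unique equilibrium). *)

(* Defs.v *)
From HB Require Import structures.
From mathcomp Require Import all_boot all_order all_algebra.
From mathcomp Require Import all_classical all_reals all_analysis.
Set Implicit Arguments. Unset Strict Implicit. Unset Printing Implicit Defensive.
Import Order.TTheory GRing.Theory Num.Theory.
Import numFieldNormedType.Exports.
Local Open Scope classical_set_scope.
Local Open Scope ring_scope.

(* R^d is modelled as row vectors 'rV[R]_d (with the product = Euclidean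
   topology); Rd R d is the same carrier equipped with the Borel sigma-algebra
   (the sigma-algebra generated by the open sets). *)
Definition Rd (R : realType) (d : nat) :=
  g_sigma_algebraType (@open 'rV[R]_d).

(* The d-dimensional Lebesgue measure (on Borel sets) is characterized as the
   measure giving every open box its volume; such a measure exists and is
   unique on the Borel sigma-algebra. *)
Definition open_box (R : realType) (d : nat) (a b : 'rV[R]_d) : set (Rd R d) :=
  [set x | forall i : 'I_d, a ord0 i < x ord0 i < b ord0 i].

Definition is_lebesgue (R : realType) (d : nat)
    (lam : {measure set (Rd R d) -> \bar R}) : Prop :=
  forall a b : 'rV[R]_d, (forall i, a ord0 i <= b ord0 i) ->
    lam (open_box a b) = (\prod_(i < d) (b ord0 i - a ord0 i))%:E.

Definition edist (R : realType) (d : nat) (x y : 'rV[R]_d) : R :=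
  Num.sqrt (\sum_(i < d) (x ord0 i - y ord0 i) ^+ 2).

Definition tau (R : realType) (d : nat) (p : R) (x1 x2 : 'rV[R]_d)
    (x : 'rV[R]_d) : R :=
  edist x x1 `^ p - edist x x2 `^ p.

Definition mfun (R : realType) (d : nat) (lam : {measure set (Rd R d) -> \bar R})
    (Om : set (Rd R d)) (f : Rd R d -> R) (p : R) (x1 x2 : 'rV[R]_d) (t : R) : R :=
  Rintegral lam (Om `&` [set x | tau p x1 x2 x < t]) f.

Definition Gfun (R : realType) (d : nat) (lam : {measure set (Rd R d) -> \bar R})
    (Om : set (Rd R d)) (f : Rd R d -> R) (p : R) (x1 x2 : 'rV[R]_d)
    (h1 h2 : R -> R) (t : R) : R :=
  h2 (1 - mfun lam Om f p x1 x2 t) - h1 (mfun lam Om f p x1 x2 t).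

(* the equilibrium psibar (its value on {tau = tbar} is irrelevant) *)
Definition psibar (R : realType) (d : nat) (p : R) (x1 x2 : 'rV[R]_d)
    (tbar : R) (x : 'rV[R]_d) : R :=
  if tau p x1 x2 x < tbar then 0 else 1.

Fixpoint psi_seq (R : realType) (d : nat) (lam : {measure set (Rd R d) -> \bar R})
    (Om : set (Rd R d)) (f : Rd R d -> R) (p : R) (x1 x2 : 'rV[R]_d)
    (h1 h2 : R -> R) (rho : nat -> R) (psi0 : Rd R d -> R) (n : nat)
    : Rd R d -> R :=
  match n with
  | 0 => psi0
  | j.+1 =>
      let psij := psi_seq lam Om f p x1 x2 h1 h2 rho psi0 j in
      let mj := Rintegral lam Om (fun x => (1 - psij x) * f x) in
      let tj1 := h2 (1 - mj) - h1 mj in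
      fun x => if tau p x1 x2 x < tj1 then rho j * psij x
               else 1 - rho j * (1 - psij x)
  end.

(* Main.v *)
Require Import Defs.
From HB Require Import structures.
From mathcomp Require Import all_boot all_order all_algebra.
From mathcomp Require Import all_classical all_reals all_analysis.
From mathcomp Require Import ring lra.
Import Order.TTheory GRing.Theory Num.Theory.
Import numFieldNormedType.Exports.
Local Open Scope classical_set_scope.
Local Open Scope ring_scope.
Lemma S_ge0 (R : realType) (rho : nat -> R) (N k : nat) :
  (forall j, 0 < rho j < 1) -> 0 <= \sum_(N <= i < k) (1 - rho i).
Proof.
move=> Hr; apply: sumr_ge0 => i _; have /andP[_ h] := Hr i; lra.
Qed.

Lemma decay (R : realType) (rho : nat -> R) (eps : R) (a : nat -> R) (N : nat) :
  (forall j, 0 < rho j < 1) -> 0 <= eps <= 1 -> 0 <= a N <= 1 ->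
  (forall k, (N <= k)%N -> 0 <= a k.+1 /\ a k.+1 <= Num.max eps (rho k * a k)) ->
  forall k, (N <= k)%N -> (0 <= a k <= 1) /\
     (a k <= eps \/ a k * (1 + \sum_(N <= i < k) (1 - rho i)) <= 1).
Proof.
move=> Hr He Ha Hs; elim=> [|k IH].
  rewrite leqn0 => /eqP HN; subst N; split => //; right.
  by rewrite big_geq // addr0 mulr1; case/andP: Ha.
rewrite leq_eqVlt => /orP [/eqP HN | HNk].
  subst N; split => //; right.
  by rewrite big_geq // addr0 mulr1; case/andP: Ha.
have [/andP[a0 a1] H] := IH HNk.
have [b0 bmax] := Hs k HNk.
rewrite big_nat_recr //=.
have S0 := @S_ge0 _ rho N k Hr.
set S := \sum_(N <= i < k) (1 - rho i) in H S0 *.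
have /andP[r0 r1] := Hr k.
case/andP: He => e0 e1.
move: bmax; rewrite le_max => /orP[be|br].
  split; last by left.
  by apply/andP; split => //; apply: le_trans be e1.
have ra1 : rho k * a k <= 1 by nra.
split; first by apply/andP; split => //; apply: le_trans br ra1.
case: H => H.
  left; apply: (le_trans br); nra.
right.
have h1 : a k.+1 * (1 + (S + (1 - rho k))) <= rho k * a k * (1 + (S + (1 - rho k))).
  apply: ler_wpM2r => //; lra.
apply: (le_trans h1); nra.
Qed.
Lemma div_tail (R : realType) (rho : nat -> R) :
  (forall j, 0 < rho j < 1) ->
  (\sum_(0 <= j <oo) (1 - rho j)%:E = +oo)%E ->
  forall (N : nat) (B : R), exists k, (N <= k)%N /\ B <= \sum_(N <= i < k) (1 - rho i).
Proof.
move=> Hr Hdiv N B.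
have t1 : forall i, 0 <= 1 - rho i by move=> i; have /andP[_ h] := Hr i; lra.
have t2 : forall i, 1 - rho i <= 1 by move=> i; have /andP[h _] := Hr i; lra.
apply/not_existsP => Hn.
have Hlt : forall k, (N <= k)%N -> \sum_(N <= i < k) (1 - rho i) < Num.max B 0.
  move=> k Nk; have := Hn k; rewrite not_andP => -[//|/negP].
  by rewrite -ltNge => h; apply: (lt_le_trans h); rewrite le_max lexx.
have Hb : forall k, (\sum_(0 <= i < k) (1 - rho i)%:E <= (Num.max B 0 + N%:R)%:E)%E.
  move=> k; rewrite sumEFin lee_fin.
  have [Nk|kN] := leqP N k.
    rewrite (big_cat_nat (leq0n N) Nk) /= addrC lerD ?(ltW (Hlt _ Nk)) //.
    apply: (le_trans (ler_sum _ (fun i _ => t2 i))).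
    by rewrite big_const_nat subn0 iter_addr addr0.
  have hB : 0 <= Num.max B 0 by rewrite le_max lexx orbT.
  apply: (le_trans (ler_sum _ (fun i _ => t2 i))).
  rewrite big_const_nat subn0 iter_addr addr0 -[X in X <= _]add0r lerD //.
  by rewrite ler_nat ltnW.
have : (\sum_(0 <= j <oo) (1 - rho j)%:E <= (Num.max B 0 + N%:R)%:E)%E.
  apply: lime_le; first by apply: is_cvg_nneseries => n _ _; rewrite lee_fin.
  by apply: nearW => k; exact: Hb.
by rewrite Hdiv leye_eq.
Qed.
Lemma decay_final (R : realType) (rho : nat -> R) (e : R) :
  (forall j, 0 < rho j < 1) ->
  (forall (N : nat) (B : R), exists k, (N <= k)%N /\ B <= \sum_(N <= i < k) (1 - rho i)) ->
  0 < e -> forall N1 : nat, exists K : nat, forall a : nat -> R,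
    0 <= a N1 <= 1 ->
    (forall k, (N1 <= k)%N -> 0 <= a k.+1 /\
        a k.+1 <= Num.max (Num.min (e / 2) 1) (rho k * a k)) ->
    forall j, (K <= j)%N -> a j < e.
Proof.
move=> Hr Hdt e0 N1.
have [k0 [Nk0 Hk0]] := Hdt N1 (2 / e).
exists k0 => a Ha Hs j kj.
have e'01 : 0 <= Num.min (e / 2) 1 <= 1.
  apply/andP; split; first by rewrite le_min; apply/andP; split; lra.
  by rewrite ge_min lexx orbT.
have Nj : (N1 <= j)%N by apply: leq_trans Nk0 kj.
have [/andP[a0 a1] H] := @decay _ rho _ a N1 Hr e'01 Ha Hs j Nj.
have hS : 2 / e <= \sum_(N1 <= i < j) (1 - rho i).
  rewrite (big_cat_nat Nk0 kj) /=; apply: (le_trans Hk0).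
  by rewrite lerDl; exact: S_ge0.
case: H => H.
  apply: (le_lt_trans H); apply: (le_lt_trans (y := e / 2)); first by rewrite ge_min lexx.
  lra.
have ee : e * (2 / e) = 2 by rewrite mulrCA mulfV ?mulr1 // gt_eqF.
set S := \sum_(N1 <= i < j) (1 - rho i) in H hS.
have h2 : a j * (2 / e) <= 1.
  apply: le_trans H; apply: ler_wpM2l => //; lra.
have : a j * 2 <= e.
  have := ler_wpM2l (ltW e0) h2; rewrite mulrCA ee mulr1 => h; lra.
lra.
Qed.
Lemma mconv (R : realType) (rho : nat -> R) (m : nat -> R) (g : R -> R) (ms : R) :
  (forall j, 0 < rho j < 1) ->
  (forall (N : nat) (B : R), exists k, (N <= k)%N /\ B <= \sum_(N <= i < k) (1 - rho i)) ->
  (forall e, 0 < e -> exists N : nat, forall j, (N <= j)%N -> 1 - rho j < e) ->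
  (forall j, 0 <= m j <= 1) ->
  (forall x, 0 <= x <= 1 -> 0 <= g x <= 1) ->
  (forall x y, 0 <= x -> x <= y -> y <= 1 -> g y <= g x) ->
  0 <= ms <= 1 -> g ms = ms ->
  (forall j, m j.+1 = rho j * m j + (1 - rho j) * g (m j)) ->
  forall e, 0 < e -> exists N : nat, forall j, (N <= j)%N -> `|m j - ms| < e.
Proof.
move=> Hr Hdt Hcv Hm Hg Hgn Hms Hfix Hrec e e0.
have e'0 : 0 < Num.min (e / 2) 1 by rewrite lt_min; apply/andP; split; lra.
have [N1 HN1] := Hcv _ e'0.
have [K HK] := @decay_final _ rho e Hr Hdt e0 N1.
exists K => j Kj; apply: (HK (fun k => `|m k - ms|)) => //.
  have /andP[a0 a1] := Hm N1; case/andP: Hms => b0 b1.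
  rewrite normr_ge0 /=; rewrite ler_norml; apply/andP; split; lra.
move=> k Nk; split => //.
set M := Num.max _ _.
have hM1 : Num.min (e / 2) 1 <= M by rewrite le_max lexx.
have hM2 : rho k * `|m k - ms| <= M by rewrite le_max lexx orbT.
have hk := HN1 k Nk.
have /andP[r0 r1] := Hr k.
have /andP[m0 m1] := Hm k.
case/andP: Hms => s0 s1.
have /andP[g0 g1] := Hg _ (Hm k).
rewrite Hrec ler_norml.
have [mk|km] := leP ms (m k).
  have gle : g (m k) <= ms by rewrite -Hfix; apply: Hgn.
  rewrite ger0_norm ?subr_ge0 // in hM2.
  apply/andP; split; nra.
have gle : ms <= g (m k) by rewrite -Hfix; apply: Hgn => //; exact: ltW.
rewrite ltr0_norm ?subr_lt0 // in hM2.
apply/andP; split; nra.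
Qed.
Lemma powp_cont (R : realType) (p : R) : 1 <= p -> continuous (fun a : R => `|a| `^ p).
Proof.
move=> p1 a.
have [->|a0] := eqVneq a 0.
  apply/cvgrPdist_lt => e e0.
  have e10 : 0 < Num.min e 1 by rewrite lt_min e0 ltr01.
  apply: (filterS _ (@nbhs0_lt R R _ e10)) => y /= hy.
  rewrite normr0 powR0 ?gt_eqF ?(lt_le_trans ltr01 p1) // sub0r normrN.
  rewrite ger0_norm ?powR_ge0 //.
  move: hy; rewrite lt_min => /andP[hye hy1].
  have [y0|y0] := eqVneq `|y| 0.
    by rewrite y0 powR0 ?gt_eqF ?(lt_le_trans ltr01 p1).
  apply: le_lt_trans hye; apply: ge1r_powR => //.
  by rewrite normr_gt0 -normr_eq0 y0 /= ltW.
apply: (@continuous_comp _ _ _ (@Num.Def.normr R R) (fun b : R => b `^ p)); first exact: norm_continuous.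
apply: differentiable_continuous; apply/derivable1_diffP.
by apply: derivable_powR; rewrite in_itv /= andbT normr_gt0.
Qed.

Lemma edist_cont (R : realType) (d : nat) (y : 'rV[R]_d) :
  continuous (fun z : 'rV[R]_d => Defs.edist z y).
Proof.
rewrite /Defs.edist => x.
apply: continuous_comp; last exact: sqrt_continuous.
have -> : (fun x0 : 'rV[R]_d => \sum_(i < d) (x0 ord0 i - y ord0 i) ^+ 2)
   = \sum_(i < d) (fun x0 : 'rV[R]_d => (x0 ord0 i - y ord0 i) ^+ 2).
  by rewrite fct_sumE.
apply: (@big_ind _ (fun g : 'rV[R]_d -> R => {for x, continuous g})).
- exact: cst_continuous.
- by move=> f g hf hg; apply: continuousD.
move=> i _.
have -> : (fun x0 : 'rV[R]_d => (x0 ord0 i - y ord0 i) ^+ 2)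
   = (fun x0 : 'rV[R]_d => x0 ord0 i - y ord0 i) \* (fun x0 : 'rV[R]_d => x0 ord0 i - y ord0 i).
  by apply/funext => z; rewrite /= expr2.
have hc : {for x, continuous (fun x0 : 'rV[R]_d => x0 ord0 i - y ord0 i)}.
  have -> : (fun x0 : 'rV[R]_d => x0 ord0 i - y ord0 i) =
     (fun x0 : 'rV[R]_d => x0 ord0 i) - (fun=> y ord0 i) by [].
  apply: continuousB; last exact: cst_continuous.
  exact: (@coord_continuous R 1 d ord0 i).
exact: continuousM.
Qed.

Lemma tau_cont (R : realType) (d : nat) (p : R) (x1 x2 : 'rV[R]_d) :
  1 <= p -> continuous (tau p x1 x2).
Proof.
move=> p1 x.
have -> : tau p x1 x2 = (fun x => `|Defs.edist x x1| `^ p) - (fun x => `|Defs.edist x x2| `^ p).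
  apply/funext => z /=; rewrite /tau.
  have h1 : 0 <= Defs.edist z x1 by rewrite /Defs.edist sqrtr_ge0.
  have h2 : 0 <= Defs.edist z x2 by rewrite /Defs.edist sqrtr_ge0.
  by rewrite -{1}(ger0_norm h1) -{1}(ger0_norm h2).
apply: continuousB.
  apply: (@continuous_comp _ _ _ (fun z : 'rV[R]_d => Defs.edist z x1) (fun b : R => `|b| `^ p)).
    exact: edist_cont.
  exact: powp_cont.
apply: (@continuous_comp _ _ _ (fun z : 'rV[R]_d => Defs.edist z x2) (fun b : R => `|b| `^ p)).
  exact: edist_cont.
exact: powp_cont.
Qed.
Lemma sep_delta (R : realType) (d : nat) (F : 'rV[R]_d -> R) (K : set 'rV[R]_d) (c : R) :
  continuous F -> compact K -> (forall x, K x -> F x != c) ->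
  exists2 del : R, 0 < del & forall x, K x -> del <= `|F x - c|.
Proof.
move=> cF cK HK.
set A := (fun x => F x - c) @` K.
have cA : compact A.
  apply: continuous_compact => //; apply: continuous_subspaceT => x.
  have -> : (fun x => F x - c) = F - (fun=> c) by [].
  by apply: continuousB; [exact: cF | exact: cst_continuous].
have clA : closed A by apply: compact_closed => //; exact: norm_hausdorff.
have oA : open (~` A) by rewrite openC.
have A0 : (~` A) 0.
  by move=> [x Kx /eqP]; rewrite subr_eq0; apply/negP; exact: HK.
have /nbhs_ballP[e e0 He] : nbhs (0 : R) (~` A) by apply: open_nbhs_nbhs; split.
exists (e / 2); first by rewrite divr_gt0.
move=> x Kx; rewrite leNgt; apply/negP => hx.
have : ball (0 : R) e (F x - c).
  rewrite -ball_normE /ball_ /= sub0r normrN; have e0' : 0 < e := e0; lra.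
by move/He; apply; exists x.
Qed.
Theorem theorem5p7 (R : realType) (d : nat)
    (lam : {measure set (Rd R d) -> \bar R}) (Hlam : is_lebesgue lam)
    (Om : set (Rd R d)) (mOm : measurable Om)
    (bOm : exists M : R, forall x, Om x -> forall i : 'I_d, `|x ord0 i| <= M)
    (f : Rd R d -> R) (mf : measurable_fun Om f)
    (f_ge0 : forall x, Om x -> 0 <= f x)
    (f_bd : exists M : R, forall x, Om x -> f x <= M)
    (f_int1 : (\int[lam]_(x in Om) (f x)%:E = 1)%E)
    (p : R) (p_ge1 : 1 <= p)
    (x1 x2 : Rd R d) (x1Om : Om x1) (x2Om : Om x2)
    (h1 h2 : R -> R)
    (h1_ge0 : forall s, 0 <= s <= 1 -> 0 <= h1 s)
    (h2_ge0 : forall s, 0 <= s <= 1 -> 0 <= h2 s)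
    (h1_nd : forall s t, 0 <= s -> s <= t -> t <= 1 -> h1 s <= h1 t)
    (h2_nd : forall s t, 0 <= s -> s <= t -> t <= 1 -> h2 s <= h2 t)
    (h1_lip : exists L : R, forall s t, 0 <= s <= 1 -> 0 <= t <= 1 ->
       `|h1 s - h1 t| <= L * `|s - t|)
    (h2_lip : exists L : R, forall s t, 0 <= s <= 1 -> 0 <= t <= 1 ->
       `|h2 s - h2 t| <= L * `|s - t|)
    (rho : nat -> R) (rho_01 : forall j, 0 < rho j < 1)
    (rho_cvg : rho @ \oo --> (1 : R))
    (rho_div : (\sum_(0 <= j <oo) (1 - rho j)%:E = +oo)%E)
    (psi0 : Rd R d -> R) (mpsi0 : measurable_fun Om psi0)
    (psi0_01 : forall x, Om x -> 0 <= psi0 x <= 1)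
    (tbar : R) (Htbar : Gfun lam Om f p x1 x2 h1 h2 tbar = tbar) :
  forall K : set 'rV[R]_d, compact K ->
    K `<=` Om `\` [set x | tau p x1 x2 x = tbar] ->
    forall eps : R, 0 < eps -> exists N : nat, forall j : nat, (N <= j)%N ->
      forall x, K x ->
        `|psi_seq lam Om f p x1 x2 h1 h2 rho psi0 j x - psibar p x1 x2 tbar x| < eps.
Proof.
move=> K cK HK eps e0.
set psi := psi_seq lam Om f p x1 x2 h1 h2 rho psi0.
set m := fun j => Rintegral lam Om (fun x => (1 - psi j x) * f x).
set H := fun s : R => h2 (1 - s) - h1 s.
set T := fun t : R => [set x : Rd R d | tau p x1 x2 x < t].
set M := Defs.mfun lam Om f p x1 x2.
have psiE : forall k x, psi k.+1 x =
    if tau p x1 x2 x < H (m k) then rho k * psi k x else 1 - rho k * (1 - psi k x).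
  by [].
have mT : forall t, measurable (T t).
  move=> t; apply: sub_sigma_algebra.
  rewrite /T (_ : [set x | _] = (tau p x1 x2) @^-1` [set y | y < t]) //.
  apply: open_comp; last exact: open_lt.
  by move=> x _; exact: tau_cont.
have intf : lam.-integrable Om (EFin \o f).
  apply/integrableP; split; first exact/measurable_realfun.measurable_EFinP.
  rewrite (eq_integral (fun x => (f x)%:E)) ?f_int1 ?ltry //.
  by move=> x /set_mem Ox /=; rewrite ?abse_EFin ger0_norm // f_ge0.
have dom : forall g : Rd R d -> R, measurable_fun Om g -> (forall x, Om x -> `|g x| <= f x) ->
    lam.-integrable Om (EFin \o g).
  move=> g mg hg; apply: le_integrable intf => //; first exact/measurable_realfun.measurable_EFinP.
  by move=> x Ox /=; rewrite lee_fin (ger0_norm (f_ge0 _ Ox)) hg.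
have If1 : Rintegral lam Om f = 1 by rewrite /Rintegral f_int1.
have psiS : forall k x, psi k.+1 x =
    rho k * psi k x + (1 - rho k) * (1 - \1_(T (H (m k))) x).
  move=> k x; rewrite psiE indicE; case: ifPn => h.
    by rewrite mem_set //= subrr mulr0 addr0.
  rewrite memNset /=; last by move=> hh; move/negP: h; apply.
  rewrite subr0 mulr1; ring.
have psiP : forall k, measurable_fun Om (psi k) /\ forall x, Om x -> 0 <= psi k x <= 1.
  elim=> [|k [mk bk]]; first by split.
  split.
    apply: (@eq_measurable_fun _ _ _ _ Om (fun x => rho k * psi k x + (1 - rho k) * (1 - \1_(T (H (m k))) x))). 
      by move=> x _; rewrite psiS.
    apply: measurable_realfun.measurable_funD; apply: measurable_realfun.measurable_funM => //.
    apply: measurable_realfun.measurable_funB; first exact: measurable_cst.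
    exact: measurable_realfun.measurable_indic.
  move=> x Ox; rewrite psiE; case/andP: (rho_01 k) => r0 r1.
  case/andP: (bk x Ox) => b0 b1.
  by case: ifPn => _; apply/andP; split; nra.
have mmeas : forall k, measurable_fun Om (fun x => (1 - psi k x) * f x).
  move=> k; apply: measurable_realfun.measurable_funM => //.
  apply: measurable_realfun.measurable_funB => //; exact: (psiP k).1.
have mbd : forall k x, Om x -> 0 <= (1 - psi k x) * f x <= f x.
  move=> k x Ox; have /andP[b0 b1] := (psiP k).2 x Ox; have f0 := f_ge0 x Ox.
  by apply/andP; split; nra.
have mint : forall k, lam.-integrable Om (EFin \o (fun x => (1 - psi k x) * f x)).
  move=> k; apply: dom => // x Ox; have /andP[b0 b1] := mbd k x Ox.
  by rewrite ger0_norm.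
have m01 : forall k, 0 <= m k <= 1.
  move=> k; apply/andP; split.
    by apply: Rintegral_ge0 => x Ox; have /andP[] := mbd k x Ox.
  rewrite -If1; apply: le_Rintegral => // x Ox; by have /andP[] := mbd k x Ox.
have imeas : forall t, measurable_fun Om (fun x => \1_(T t) x * f x).
  move=> t; apply: measurable_realfun.measurable_funM => //.
have ibd : forall t x, Om x -> 0 <= \1_(T t) x * f x <= f x.
  move=> t x Ox; have f0 := f_ge0 x Ox; rewrite indicE.
  by case: (_ \in _) => /=; rewrite ?mul1r ?mul0r lexx ?f0.
have iint : forall t, lam.-integrable Om (EFin \o (fun x => \1_(T t) x * f x)).
  move=> t; apply: dom => // x Ox; have /andP[b0 b1] := ibd t x Ox.
  by rewrite ger0_norm.
have ME : forall t, M t = Rintegral lam Om (fun x => \1_(T t) x * f x).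
  move=> t; rewrite /M /Defs.mfun Rintegral_mkcondr; apply: eq_Rintegral => x _.
  by rewrite /patch indicE; case: (_ \in _) => /=; rewrite ?mul1r ?mul0r.
have M01 : forall t, 0 <= M t <= 1.
  move=> t; rewrite ME; apply/andP; split.
    by apply: Rintegral_ge0 => x Ox; have /andP[] := ibd t x Ox.
  rewrite -If1; apply: le_Rintegral => // x Ox; by have /andP[] := ibd t x Ox.
have Mmono : forall s t, s <= t -> M s <= M t.
  move=> s t st; rewrite !ME; apply: le_Rintegral => // x Ox.
  apply: ler_wpM2r; first exact: f_ge0.
  rewrite !indicE; case: (boolP (x \in T s)) => //= hs.
  by rewrite mem_set //=; exact: lt_le_trans (set_mem hs) st.
have mrec : forall k, m k.+1 = rho k * m k + (1 - rho k) * M (H (m k)).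
  move=> k; rewrite ME /m.
  have /andP[r0 r1] := rho_01 k.
  rewrite -RintegralZl // -RintegralZl // -RintegralD //; last first.
  - apply: dom => //; first by apply: measurable_realfun.measurable_funM.
    move=> x Ox; have /andP[b0 b1] := ibd (H (m k)) x Ox.
    rewrite normrM !ger0_norm //; nra.
  - apply: dom => //; first by apply: measurable_realfun.measurable_funM.
    move=> x Ox; have /andP[b0 b1] := mbd k x Ox.
    rewrite normrM !ger0_norm //; nra.
  apply: eq_Rintegral => x _; rewrite psiS; ring.
have Hdt := @div_tail R rho rho_01 rho_div.
have Hcv : forall e, 0 < e -> exists N : nat, forall j, (N <= j)%N -> 1 - rho j < e.
  move: rho_cvg => /cvgrPdist_lt Hr e e1; have [N _ HN] := Hr e e1.
  exists N => j Nj; have := HN j Nj; apply: le_lt_trans; exact: ler_norm.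
set ms := M tbar.
have Htb : H ms = tbar by exact: Htbar.
have Hgn : forall x y, 0 <= x -> x <= y -> y <= 1 -> M (H y) <= M (H x).
  move=> x y x0 xy y1; apply: Mmono; rewrite /H.
  have := h2_nd (1 - y) (1 - x); have := h1_nd x y.
  move=> ha hb; have := ha x0 xy y1; have := hb ltac:(lra) ltac:(lra) ltac:(lra); lra.
have Hfix : M (H ms) = ms by rewrite Htb.
have mcv := @mconv R rho m (fun s => M (H s)) ms rho_01 Hdt Hcv m01
   (fun x _ => M01 _) Hgn (M01 tbar) Hfix mrec.
have [L1 hL1] := h1_lip.
have [L2 hL2] := h2_lip.
have tcv : forall del, 0 < del -> exists N : nat, forall j, (N <= j)%N -> `|H (m j) - tbar| < del.
  move=> del d0.
  have Ls0 : 0 < `|L1| + `|L2| + 1 by have := normr_ge0 L1; have := normr_ge0 L2; lra.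
  have [N HN] := mcv (del / (`|L1| + `|L2| + 1)) (divr_gt0 d0 Ls0).
  exists N => j Nj; have := HN j Nj; rewrite ltr_pdivlMr // => hj.
  rewrite -Htb /H.
  have ms01 : 0 <= ms <= 1 := M01 tbar; have mj01 := m01 j.
  have e1 := hL1 (m j) ms mj01 ms01.
  have e2 : `|h2 (1 - m j) - h2 (1 - ms)| <= L2 * `|m j - ms|.
    have -> : m j - ms = - ((1 - m j) - (1 - ms)) by ring.
    rewrite normrN; apply: hL2.
      by case/andP: mj01 => ? ?; apply/andP; split; lra.
    by case/andP: ms01 => ? ?; apply/andP; split; lra.
  have n0 := normr_ge0 (m j - ms).
  have n1 : L1 * `|m j - ms| <= `|L1| * `|m j - ms| by apply: ler_wpM2r => //; exact: ler_norm.
  have n2 : L2 * `|m j - ms| <= `|L2| * `|m j - ms| by apply: ler_wpM2r => //; exact: ler_norm.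
  have -> : h2 (1 - m j) - h1 (m j) - (h2 (1 - ms) - h1 ms) =
    (h2 (1 - m j) - h2 (1 - ms)) - (h1 (m j) - h1 ms) by ring.
  apply: (le_lt_trans (ler_normB _ _)); nra.
have [del d0 Hdel] := @sep_delta R d (tau p x1 x2) K tbar (@tau_cont R d p x1 x2 p_ge1) cK
  (fun x Kx => introN eqP (HK x Kx).2).
have [N2 HN2] := tcv del d0.
have [K0 HK0] := @decay_final R rho eps rho_01 Hdt e0 N2.
exists K0 => j Kj x Kx.
have Ox : Om x := (HK x Kx).1.
have hx := Hdel x Kx.
rewrite /psibar; case: ifPn => hlt.
  rewrite subr0 ger0_norm; last by case/andP: ((psiP j).2 x Ox).
  apply: (HK0 (fun k => psi k x)) => //; first exact: (psiP N2).2 x Ox.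
  move=> k Nk; have := HN2 k Nk; rewrite psiE.
  rewrite ltr0_norm ?subr_lt0 // in hx.
  have /andP[r0 r1] := rho_01 k; have /andP[b0 b1] := (psiP k).2 x Ox.
  case: ifPn => hh hk.
    split; first by nra.
    by rewrite le_max lexx orbT.
  exfalso; move/negP: hh; apply; rewrite ltr_norml in hk.
  by case/andP: hk => hk1 hk2; lra.
rewrite -leNgt in hlt.
rewrite -normrN opprB ger0_norm; last by case/andP: ((psiP j).2 x Ox) => ? ?; lra.
apply: (HK0 (fun k => 1 - psi k x)) => //.
  by case/andP: ((psiP N2).2 x Ox) => ? ?; apply/andP; split; lra.
move=> k Nk; have := HN2 k Nk; rewrite psiE.
rewrite ger0_norm ?subr_ge0 // in hx.
have /andP[r0 r1] := rho_01 k; have /andP[b0 b1] := (psiP k).2 x Ox.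
case: ifPn => hh hk.
  rewrite ltr_norml in hk.
  case/andP: hk => hk1 hk2; have : del < del by lra.
  by rewrite ltxx.
split; first by nra.
have -> : 1 - (1 - rho k * (1 - psi k x)) = rho k * (1 - psi k x) by ring.
by rewrite le_max lexx orbT.
Qed.
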